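(* The set $\mathcal{L}$ of $L$-convex polyominoes equals $Av_{\mathfrak{P}}(H,V,S_1,S_2)$, where $H=\begin{bmatrix}1&0&1\end{bmatrix}$, $V=\begin{bmatrix}1\\0\\1\end{bmatrix}$, $S_1=\begin{bmatrix}1&0\\0&1\end{bmatrix}$ and $S_2=\begin{bmatrix}0&1\\1&0\end{bmatrix}$.
   Context: A polyomino is a finite union of unit cells of $\mathbb{Z}\times\mathbb{Z}$ that is connected via edge adjacency, up to translation, identified with the binary matrix of its minimal bounding rectangle (entry $1$ iff the corresponding unit square is a cell; rows numbered bottom to top, first written row of a displayed matrix is the top row). A matrix is a submatrix of another if obtained by deleting rows and/or columns; $Av_{\mathfrak{P}}(\mathcal{M})$ is the set of polyominoes with no submatrix in $\mathcal{M}$. A polyomino is convex if each of its rows and each of its columns is connected. A path in a polyomino is a sequence of distinct cells of the polyomino in which consecutive cells share an edge; it is monotone if all its horizontal steps go in the same direction and all its vertical steps go in the same direction; a change of direction is a place where a horizontal step is followed by a vertical one or vice versa. A polyomino is $L$-convex if it is convex and every pair of its cells can be connected by a monotone path with at most one change of direction. *)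

(* Defs.v *)
From mathcomp Require Import all_boot all_algebra.
Set Implicit Arguments. Unset Strict Implicit. Unset Printing Implicit Defensive.

(* A binary matrix A : 'M[bool]_(m, n); row index 0 is the top (first written)
   row, column index 0 the leftmost column.  Cells are positions (i, j) : nat*nat
   (row, column) with A i j = true. *)

Definition cellb (m n : nat) (A : 'M[bool]_(m, n)) (p : nat * nat) : bool :=
  if (insub p.1 : option 'I_m) is Some i then
    if (insub p.2 : option 'I_n) is Some j then A i j else false
  else false.

Definition adj (p q : nat * nat) : bool :=
  ((p.1 == q.1) && ((p.2.+1 == q.2) || (q.2.+1 == p.2))) ||
  ((p.2 == q.2) && ((p.1.+1 == q.1) || (q.1.+1 == p.1))).

Definition is_path_between (m n : nat) (A : 'M[bool]_(m, n))
    (c1 c2 : nat * nat) (s : seq (nat * nat)) : Prop :=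
  [/\ all (cellb A) (c1 :: s), uniq (c1 :: s), path adj c1 s & last c1 s = c2].

Definition steps (c1 : nat * nat) (s : seq (nat * nat)) :=
  zip (c1 :: s) s.

Definition monotone (c1 : nat * nat) (s : seq (nat * nat)) : bool :=
  let st := steps c1 s in
  ~~ (has (fun pq : (nat*nat)*(nat*nat) => pq.1.2 < pq.2.2) st &&
      has (fun pq : (nat*nat)*(nat*nat) => pq.2.2 < pq.1.2) st) &&
  ~~ (has (fun pq : (nat*nat)*(nat*nat) => pq.1.1 < pq.2.1) st &&
      has (fun pq : (nat*nat)*(nat*nat) => pq.2.1 < pq.1.1) st).

Definition changes (c1 : nat * nat) (s : seq (nat * nat)) : nat :=
  let hs := map (fun pq : (nat*nat)*(nat*nat) => pq.1.1 == pq.2.1) (steps c1 s) in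
  count (fun ab : bool * bool => ab.1 != ab.2) (zip hs (behead hs)).

(* A is (the matrix of the minimal bounding rectangle of) a polyomino:
   nonempty, every row and every column contains a cell, and the cells are
   connected via edge adjacency. *)
Definition is_polyomino (m n : nat) (A : 'M[bool]_(m, n)) : Prop :=
  [/\ 0 < m, 0 < n,
      (forall i : 'I_m, exists j : 'I_n, A i j),
      (forall j : 'I_n, exists i : 'I_m, A i j) &
      (forall c1 c2, cellb A c1 -> cellb A c2 ->
         exists s, is_path_between A c1 c2 s)].

Definition convex (m n : nat) (A : 'M[bool]_(m, n)) : Prop :=
  (forall (i : 'I_m) (j1 j j2 : 'I_n), j1 <= j <= j2 -> A i j1 -> A i j2 -> A i j) /\
  (forall (j : 'I_n) (i1 i i2 : 'I_m), i1 <= i <= i2 -> A i1 j -> A i2 j -> A i j).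

Definition L_convex (m n : nat) (A : 'M[bool]_(m, n)) : Prop :=
  convex A /\
  forall c1 c2, cellb A c1 -> cellb A c2 ->
    exists s, [/\ is_path_between A c1 c2 s, monotone c1 s & changes c1 s <= 1].

Definition submatrix (p q m n : nat) (B : 'M[bool]_(p, q)) (A : 'M[bool]_(m, n)) : Prop :=
  exists (f : 'I_p -> 'I_m) (g : 'I_q -> 'I_n),
    [/\ (forall i i' : 'I_p, i < i' -> f i < f i'),
        (forall j j' : 'I_q, j < j' -> g j < g j') &
        (forall i j, B i j = A (f i) (g j))].

Definition Hpat : 'M[bool]_(1, 3) := \matrix_(i < 1, j < 3) (j != 1%N :> nat).
Definition Vpat : 'M[bool]_(3, 1) := \matrix_(i < 3, j < 1) (i != 1%N :> nat).
Definition S1pat : 'M[bool]_(2, 2) := \matrix_(i < 2, j < 2) (i == j :> nat).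
Definition S2pat : 'M[bool]_(2, 2) := \matrix_(i < 2, j < 2) (i != j :> nat).

Definition avoids_HVS (m n : nat) (A : 'M[bool]_(m, n)) : Prop :=
  [/\ ~ submatrix Hpat A, ~ submatrix Vpat A, ~ submatrix S1pat A & ~ submatrix S2pat A].

(* Main.v *)
Require Import Defs.
From mathcomp Require Import all_boot all_algebra.
From mathcomp Require Import zify.
Set Implicit Arguments. Unset Strict Implicit. Unset Printing Implicit Defensive.

Lemma steps_cons (c x : nat*nat) s : steps c (x :: s) = (c, x) :: steps x s.
Proof. by []. Qed.

Lemma changes_cons2 (c x y : nat*nat) s :
  changes c (x :: y :: s) = ((c.1 == x.1) != (x.1 == y.1)) + changes x (y :: s).
Proof. by []. Qed.

Lemma changes1 (c x : nat*nat) : changes c [:: x] = 0.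
Proof. by []. Qed.

Lemma lastH (x y : nat*nat) s : path adj x (y :: s) -> x.1 == y.1 ->
  changes x (y :: s) = 0 -> (last y s).1 = x.1.
Proof.
elim: s x y => [|z s IH] x y /=; first by move=> _ /eqP.
case/andP=> _ Hp Hxy; rewrite changes_cons2 Hxy.
case Hyz: (y.1 == z.1) => //  /= Hc.
have -> : (last z s).1 = y.1 by apply: (IH y z); rewrite ?Hp ?Hyz.
by rewrite (eqP Hxy).
Qed.

Lemma adjV (x y : nat*nat) : adj x y -> x.1 != y.1 -> x.2 = y.2.
Proof.
rewrite /adj; case/orP=> /andP[/eqP-> H] //; first by rewrite eqxx.
Qed.

Lemma lastV (x y : nat*nat) s : path adj x (y :: s) -> x.1 != y.1 ->
  changes x (y :: s) = 0 -> (last y s).2 = x.2.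
Proof.
elim: s x y => [|z s IH] x y /=; first by move=> /andP[H _] Hn _; rewrite (adjV H Hn).
case/andP=> Ha Hp Hxy; rewrite changes_cons2 (negbTE Hxy).
case Hyz: (y.1 == z.1) => //  /= Hc.
have -> : (last z s).2 = y.2 by apply: (IH y z); rewrite ?Hp ?Hyz.
by rewrite (adjV Ha Hxy).
Qed.

Lemma cornerH (c x : nat*nat) s : path adj c (x :: s) -> c.1 == x.1 ->
  changes c (x :: s) <= 1 -> (c.1, (last x s).2) \in c :: x :: s.
Proof.
elim: s c x => [|y s IH] c x /=.
  by move=> _ /eqP->; rewrite -surjective_pairing !inE eqxx orbT.
case/andP=> Ha Hp Hcx; rewrite changes_cons2 Hcx.
case Hxy: (x.1 == y.1) =>  /= Hc.
  have := IH x y Hp Hxy Hc.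
  by rewrite (eqP Hcx) !inE => /orP[->|->]; rewrite !orbT.
have Hc0 : changes x (y :: s) = 0 by move: Hc; case: (changes _ _).
rewrite (lastV Hp _ Hc0) ?Hxy // (eqP Hcx) -surjective_pairing.
by rewrite !inE eqxx !orbT.
Qed.

Lemma cornerV (c x : nat*nat) s : path adj c (x :: s) -> c.1 != x.1 ->
  changes c (x :: s) <= 1 -> ((last x s).1, c.2) \in c :: x :: s.
Proof.
elim: s c x => [|y s IH] c x /=.
  by move=> /andP[Ha _] Hn; rewrite (adjV Ha Hn) -surjective_pairing !inE eqxx orbT.
case/andP=> Ha Hp Hcx; rewrite changes_cons2 (negbTE Hcx).
case Hxy: (x.1 == y.1) =>  /= Hc.
  have Hc0 : changes x (y :: s) = 0 by move: Hc; case: (changes _ _).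
  rewrite (lastH Hp _ Hc0) ?Hxy // (adjV Ha Hcx) -surjective_pairing.
  by rewrite !inE eqxx !orbT.
have := IH x y Hp (negbT Hxy) Hc.
by rewrite (adjV Ha Hcx) !inE => /orP[->|->]; rewrite !orbT.
Qed.

Lemma corner (c1 : nat*nat) s : path adj c1 s -> changes c1 s <= 1 ->
  ((c1.1, (last c1 s).2) \in c1 :: s) || (((last c1 s).1, c1.2) \in c1 :: s).
Proof.
case: s => [|x s] /=; first by rewrite -surjective_pairing inE eqxx.
case H: (c1.1 == x.1) => Hp Hc.
  by rewrite (cornerH Hp) ?H.
by rewrite (cornerV Hp) ?H ?orbT.
Qed.

Fixpoint down (x k : nat) : seq nat :=
  if k is k'.+1 then x.-1 :: down x.-1 k' else [::].

Definition seg (x y : nat) : seq nat :=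
  if x <= y then iota x.+1 (y - x) else down x (x - y).

Lemma iota_last x k : last x (iota x.+1 k) = x + k.
Proof. by elim: k x => [|k IH] x /=; rewrite ?addn0 // IH addnS. Qed.

Lemma iota_path x k : path (fun u v => v == u.+1) x (iota x.+1 k).
Proof. by elim: k x => [|k IH] x //=; rewrite eqxx IH. Qed.

Lemma down_last x k : k <= x -> last x (down x k) = x - k.
Proof.
elim: k x => [|k IH] x /=; first by rewrite subn0.
by move=> Hk; rewrite IH; lia.
Qed.

Lemma down_path x k : k <= x -> path (fun u v => u == v.+1) x (down x k).
Proof.
elim: k x => [|k IH] x //= Hk.
rewrite IH; last by lia.
by rewrite andbT; apply/eqP; lia.
Qed.

Lemma down_mem x k y : k <= x -> y \in down x k -> x - k <= y < x.
Proof.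
elim: k x => [|k IH] x //= Hk; rewrite inE => /orP[/eqP->|H].
  by lia.
have Hk' : k <= x.-1 by lia.
have /andP[H1 H2] := IH _ Hk' H.
by lia.
Qed.

Lemma path_true T (e : rel T) x s : (forall u v, e u v) -> path e x s.
Proof. by move=> H; elim: s x => [|y s IH] x //=; rewrite H IH. Qed.

Lemma seg_last x y : last x (seg x y) = y.
Proof.
rewrite /seg; case: leqP => H; first by rewrite iota_last; lia.
by rewrite down_last; lia.
Qed.

Lemma seg_mem x y k : k \in seg x y -> minn x y <= k <= maxn x y.
Proof.
rewrite /seg; case: leqP => H.
  rewrite mem_iota => /andP[H1 H2]; lia.
move=> /(down_mem (leq_subr _ _)) /andP[H1 H2]; lia.
Qed.

Lemma seg_dir x y : (x <= y /\ path (fun u v => v == u.+1) x (seg x y)) \/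
                    (y <= x /\ path (fun u v => u == v.+1) x (seg x y)).
Proof.
rewrite /seg; case: leqP => H; first by left; rewrite iota_path.
by right; rewrite down_path; lia.
Qed.

Lemma seg_uniq x y : uniq (x :: seg x y).
Proof.
case: (seg_dir x y) => [[_ H]|[_ H]].
  have : path ltn x (seg x y).
    by apply: (sub_path _ H) => u v /= /eqP->.
  by move=> Hs; apply: (@sorted_uniq _ ltn _ _ (x :: seg x y) Hs); [apply: ltn_trans | move=> u; rewrite /= ltnn].
have : path gtn x (seg x y).
  by apply: (sub_path _ H) => u v /= /eqP->.
by move=> Hs; apply: (@sorted_uniq _ gtn _ _ (x :: seg x y) Hs); [move=> u v w H1 H2; apply: ltn_trans H2 H1 | move=> u; rewrite /= ltnn].
Qed.
Lemma all_steps (R : pred ((nat*nat)*(nat*nat))) c s :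
  all R (steps c s) = path (fun x y => R (x, y)) c s.
Proof. by elim: s c => [|x s IH] c //=; rewrite -IH. Qed.

Lemma steps_cat c s1 s2 : steps c (s1 ++ s2) = steps c s1 ++ steps (last c s1) s2.
Proof.
elim: s1 c => [|x s1 IH] c /=; first by case: s2.
by rewrite -IH.
Qed.

Definition hsc (l : seq bool) := count (fun ab : bool * bool => ab.1 != ab.2) (zip l (behead l)).

Lemma hsc_cons2 x y l : hsc [:: x, y & l] = (x != y) + hsc (y :: l).
Proof. by []. Qed.

Lemma hsc_nseq q x : hsc (nseq q x) = 0.
Proof.
elim: q => [|q IH] //; case: q IH => [|q] IH //.
by change (hsc [:: x, x & nseq q x] = 0); rewrite hsc_cons2 eqxx.
Qed.

Lemma hsc_cat p q b : hsc (nseq p b ++ nseq q (~~ b)) <= 1.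
Proof.
elim: p => [|p IH]; first by rewrite /= hsc_nseq.
case: p IH => [|p] IH.
  case: q {IH} => [|q] //; change (hsc [:: b, ~~ b & nseq q (~~ b)] <= 1).
  by rewrite hsc_cons2 -[~~ b :: _]/(nseq q.+1 (~~ b)) hsc_nseq; case: b.
by change (hsc [:: b, b & nseq p b ++ nseq q (~~ b)] <= 1); rewrite hsc_cons2 eqxx.
Qed.

Lemma changes_cat (bb : bool) c s1 s2 :
  path (fun p q : nat*nat => (p.1 == q.1) == bb) c s1 ->
  path (fun p q : nat*nat => (p.1 == q.1) == ~~ bb) (last c s1) s2 ->
  changes c (s1 ++ s2) <= 1.
Proof.
move=> H1 H2; rewrite /changes steps_cat map_cat.
set l1 := map _ (steps c s1); set l2 := map _ (steps _ s2).
have E1 : all (pred1 bb) l1 by rewrite /l1 all_map all_steps.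
have E2 : all (pred1 (~~ bb)) l2 by rewrite /l2 all_map all_steps.
rewrite (all_pred1P _ _ E1) (all_pred1P _ _ E2).
exact: hsc_cat.
Qed.

Lemma monotone_suff c s :
  path (fun p q : nat*nat => p.2 <= q.2) c s || path (fun p q : nat*nat => q.2 <= p.2) c s ->
  path (fun p q : nat*nat => p.1 <= q.1) c s || path (fun p q : nat*nat => q.1 <= p.1) c s ->
  monotone c s.
Proof.
move=> H1 H2; rewrite /monotone; apply/andP; split; apply/nandP.
- case/orP: H1 => H1; [right|left]; apply/hasPn => pq.
  + have {}H1 : all (fun pq : (nat*nat)*(nat*nat) => pq.1.2 <= pq.2.2) (steps c s) by rewrite all_steps.
    by move=> /(allP H1) /=; rewrite -leqNgt.
  + have {}H1 : all (fun pq : (nat*nat)*(nat*nat) => pq.2.2 <= pq.1.2) (steps c s) by rewrite all_steps.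
    by move=> /(allP H1) /=; rewrite -leqNgt.
- case/orP: H2 => H2; [right|left]; apply/hasPn => pq.
  + have {}H2 : all (fun pq : (nat*nat)*(nat*nat) => pq.1.1 <= pq.2.1) (steps c s) by rewrite all_steps.
    by move=> /(allP H2) /=; rewrite -leqNgt.
  + have {}H2 : all (fun pq : (nat*nat)*(nat*nat) => pq.2.1 <= pq.1.1) (steps c s) by rewrite all_steps.
    by move=> /(allP H2) /=; rewrite -leqNgt.
Qed.

Lemma path_mapC (R : rel (nat*nat)) a d s :
  path R (a,d) (map (fun k => (k,d)) s) = path (fun u v => R (u,d) (v,d)) a s.
Proof. by elim: s a => [|x s IH] a //=; rewrite IH. Qed.

Lemma path_mapR (R : rel (nat*nat)) a d s :
  path R (a,d) (map (pair a) s) = path (fun u v => R (a,u) (a,v)) d s.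
Proof. by elim: s d => [|x s IH] d //=; rewrite IH. Qed.

Lemma Hpath (P : pred (nat*nat)) a b c d :
  (forall k, minn b d <= k <= maxn b d -> P (a,k)) ->
  (forall k, minn a c <= k <= maxn a c -> P (k,d)) ->
  exists s, [/\ all P ((a,b)::s), uniq ((a,b)::s), path adj (a,b) s,
     last (a,b) s = (c,d) & monotone (a,b) s && (changes (a,b) s <= 1)].
Proof.
move=> Hrow Hcol.
exists (map (pair a) (seg b d) ++ map (fun k => (k,d)) (seg a c)).
have L1 : last (a,b) (map (pair a) (seg b d)) = (a,d) by rewrite last_map seg_last.
have F : forall s, path adj (a,d) s = path adj ((fun k => (k,d)) a) s by [].
have F2 : forall (R : rel (nat*nat)) s, path R (a,d) s = path R ((fun k => (k,d)) a) s by [].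
split.
- rewrite /= all_cat !all_map; apply/and3P; split.
  + apply: Hrow; lia.
  + by apply/allP => k /seg_mem; exact: Hrow.
  + by apply/allP => k /seg_mem; exact: Hcol.
- rewrite -cat_cons cat_uniq; apply/and3P; split.
  + rewrite -[(a,b) :: _]/(map (pair a) (b :: seg b d)) map_inj_uniq ?seg_uniq //.
    by move=> u v [].
  + apply/hasPn => p /mapP [k Hk ->]; apply/negP.
    rewrite -[(a,b) :: _]/(map (pair a) (b :: seg b d)); case/mapP => k' _ [Ekk _].
    by have := seg_uniq a c; rewrite /= -Ekk; move: Hk; rewrite Ekk => ->.
  + rewrite map_inj_uniq; first by case/andP: (seg_uniq a c).
    by move=> u v [].
- rewrite cat_path L1 path_map -[(a,d)]/((fun k => (k,d)) a) path_map; apply/andP; split.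
  + case: (seg_dir b d) => [[_ H]|[_ H]]; apply: (sub_path _ H) => u v /eqP ->;
      by rewrite /relpre /adj /= !eqxx ?orbT.
  + case: (seg_dir a c) => [[_ H]|[_ H]]; apply: (sub_path _ H) => u v /eqP ->;
      by rewrite /relpre /adj /= !eqxx ?orbT.
- by rewrite last_cat L1 -[(a,d)]/((fun k => (k,d)) a) last_map seg_last.
- apply/andP; split.
 apply: monotone_suff; rewrite !cat_path L1 !path_mapC !path_mapR.
  + case: (seg_dir b d) => [[_ H]|[_ H]]; [apply/orP; left|apply/orP; right];
      (apply/andP; split; [apply: (sub_path _ H) => u v /eqP -> /= | apply: path_true]) => //.
  + case: (seg_dir a c) => [[_ H]|[_ H]]; [apply/orP; left|apply/orP; right];
      (apply/andP; split; [apply: path_true | apply: (sub_path _ H) => u v /eqP -> /= ]) => //.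
- apply: (@changes_cat true); rewrite ?L1 ?path_mapC ?path_mapR.
  + by apply: path_true => u v; rewrite /relpre /= eqxx.
  + case: (seg_dir a c) => [[_ H]|[_ H]]; apply: (sub_path _ H) => u v /eqP -> /=;
      by rewrite ?eqn_leq ?ltnn ?andbF.
Qed.

Lemma Vpath (P : pred (nat*nat)) a b c d :
  (forall k, minn a c <= k <= maxn a c -> P (k,b)) ->
  (forall k, minn b d <= k <= maxn b d -> P (c,k)) ->
  exists s, [/\ all P ((a,b)::s), uniq ((a,b)::s), path adj (a,b) s,
     last (a,b) s = (c,d) & monotone (a,b) s && (changes (a,b) s <= 1)].
Proof.
move=> Hcol Hrow.
exists (map (fun k => (k,b)) (seg a c) ++ map (pair c) (seg b d)).
have L1 : last (a,b) (map (fun k => (k,b)) (seg a c)) = (c,b).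
  by rewrite -[(a,b)]/((fun k => (k,b)) a) last_map seg_last.
split.
- rewrite /= all_cat !all_map; apply/and3P; split.
  + apply: Hcol; lia.
  + by apply/allP => k /seg_mem; exact: Hcol.
  + by apply/allP => k /seg_mem; exact: Hrow.
- rewrite -cat_cons cat_uniq; apply/and3P; split.
  + rewrite -[(a,b) :: _]/(map (fun k => (k,b)) (a :: seg a c)) map_inj_uniq ?seg_uniq //.
    by move=> u v [].
  + apply/hasPn => p /mapP [k Hk ->]; apply/negP.
    rewrite -[(a,b) :: _]/(map (fun k => (k,b)) (a :: seg a c)); case/mapP => k' _ [_ Ekk].
    by have := seg_uniq b d; rewrite /= -Ekk; move: Hk; rewrite Ekk => ->.
  + rewrite map_inj_uniq; first by case/andP: (seg_uniq b d).
    by move=> u v [].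
- rewrite cat_path L1 path_mapC path_mapR; apply/andP; split.
  + case: (seg_dir a c) => [[_ H]|[_ H]]; apply: (sub_path _ H) => u v /eqP ->;
      by rewrite /adj /= !eqxx ?orbT.
  + case: (seg_dir b d) => [[_ H]|[_ H]]; apply: (sub_path _ H) => u v /eqP ->;
      by rewrite /adj /= !eqxx ?orbT.
- by rewrite last_cat L1 last_map seg_last.
- apply/andP; split.
 apply: monotone_suff; rewrite !cat_path L1 !path_mapC !path_mapR.
  + case: (seg_dir b d) => [[_ H]|[_ H]]; [apply/orP; left|apply/orP; right];
      (apply/andP; split; [apply: path_true | apply: (sub_path _ H) => u v /eqP -> /= ]) => //.
  + case: (seg_dir a c) => [[_ H]|[_ H]]; [apply/orP; left|apply/orP; right];
      (apply/andP; split; [apply: (sub_path _ H) => u v /eqP -> /= | apply: path_true]) => //.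
- apply: (@changes_cat false); rewrite ?L1 ?path_mapC ?path_mapR.
  + case: (seg_dir a c) => [[_ H]|[_ H]]; apply: (sub_path _ H) => u v /eqP -> /=;
      by rewrite ?eqn_leq ?ltnn ?andbF.
  + by apply: path_true => u v; rewrite /= eqxx.
Qed.


Section Main.
Variables (m n : nat) (A : 'M[bool]_(m, n)).

Lemma cellb_ord (i : 'I_m) (j : 'I_n) : cellb A (val i, val j) = A i j.
Proof. by rewrite /cellb /= !valK. Qed.

Lemma cellb_inv p : cellb A p -> exists (i : 'I_m) (j : 'I_n), p = (val i, val j).
Proof.
rewrite /cellb; case: insubP => // i _ Ei; case: insubP => // j _ Ej _.
by exists i, j; rewrite Ei Ej -surjective_pairing.
Qed.

Lemma Lcorner : L_convex A -> forall i1 i2 j1 j2, A i1 j1 -> A i2 j2 -> A i1 j2 || A i2 j1.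
Proof.
case=> _ HL i1 i2 j1 j2 H1 H2.
have [s [[Hall _ Hp Hl] _ Hc]] := HL (val i1, val j1) (val i2, val j2)
   ltac:(by rewrite cellb_ord) ltac:(by rewrite cellb_ord).
move: (corner Hp Hc); rewrite Hl /=.
by case/orP => /(allP Hall); rewrite cellb_ord => ->; rewrite ?orbT.
Qed.

Lemma sub2 (B : 'M[bool]_(2,2)) (i1 i2 : 'I_m) (j1 j2 : 'I_n) :
  i1 < i2 -> j1 < j2 ->
  (forall x y : 'I_2, B x y = A (if val x == 0 then i1 else i2) (if val y == 0 then j1 else j2)) ->
  submatrix B A.
Proof.
move=> Hi Hj HB; exists (fun x : 'I_2 => if val x == 0 then i1 else i2),
  (fun y : 'I_2 => if val y == 0 then j1 else j2); split => //.
- by move=> [[|[|//]] ?] [[|[|//]] ?].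
- by move=> [[|[|//]] ?] [[|[|//]] ?].
Qed.


Lemma avoid_convex : ~ submatrix Hpat A -> ~ submatrix Vpat A -> convex A.
Proof.
move=> nH nV; split.
- move=> i j1 j j2 /andP[l1 l2] A1 A2; case Aj: (A i j) => //; exfalso; apply: nH.
  have n1 : val j1 != val j by apply/negP => /eqP /val_inj E; subst; rewrite Aj in A1.
  have n2 : val j != val j2 by apply/negP => /eqP /val_inj E; subst; rewrite Aj in A2.
  have s1 : j1 < j by rewrite ltn_neqAle n1 l1.
  have s2 : j < j2 by rewrite ltn_neqAle n2 l2.
  exists (fun _ => i), (fun t : 'I_3 => if val t == 0 then j1 else if val t == 1 then j else j2).
  split.
  + by move=> [[|//] ?] [[|//] ?].
  + move=> [[|[|[|//]]] ?] [[|[|[|//]]] ?] //= _; exact: ltn_trans s2.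
  + by move=> [[|//] ?] [[|[|[|//]]] ?]; rewrite mxE /= ?A1 ?A2 ?Aj.
- move=> j i1 i i2 /andP[l1 l2] A1 A2; case Aj: (A i j) => //; exfalso; apply: nV.
  have n1 : val i1 != val i by apply/negP => /eqP /val_inj E; subst; rewrite Aj in A1.
  have n2 : val i != val i2 by apply/negP => /eqP /val_inj E; subst; rewrite Aj in A2.
  have s1 : i1 < i by rewrite ltn_neqAle n1 l1.
  have s2 : i < i2 by rewrite ltn_neqAle n2 l2.
  exists (fun t : 'I_3 => if val t == 0 then i1 else if val t == 1 then i else i2), (fun _ => j).
  split.
  + move=> [[|[|[|//]]] ?] [[|[|[|//]]] ?] //= _; exact: ltn_trans s2.
  + by move=> [[|//] ?] [[|//] ?].
  + by move=> [[|[|[|//]]] ?] [[|//] ?]; rewrite mxE /= ?A1 ?A2 ?Aj.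
Qed.

Lemma rowN : convex A -> forall a b d k, cellb A (a,b) -> cellb A (a,d) ->
  minn b d <= k <= maxn b d -> cellb A (a,k).
Proof.
move=> [cr _] a b d k Hb Hd Hk.
have [i [jb [Ea Eb]]] := cellb_inv Hb.
have [i' [jd [Ea' Ed]]] := cellb_inv Hd.
have ii : i' = i by apply: ord_inj; rewrite -Ea' -Ea.
subst.
rewrite cellb_ord in Hb; rewrite cellb_ord in Hd.
have kn : k < n by move: (ltn_ord jb) (ltn_ord jd); lia.
rewrite -[k]/(val (Ordinal kn)) !cellb_ord.
case: (leqP jb jd) => Hbd.
- by apply: (cr i jb (Ordinal kn) jd _ Hb Hd) => /=; lia.
- by apply: (cr i jd (Ordinal kn) jb _ Hd Hb) => /=; lia.
Qed.

Lemma colN : convex A -> forall d a c k, cellb A (a,d) -> cellb A (c,d) ->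
  minn a c <= k <= maxn a c -> cellb A (k,d).
Proof.
move=> [_ cc] d a c k Ha Hc Hk.
have [ia [j [Ea Ed]]] := cellb_inv Ha.
have [ic [j' [Ec Ed']]] := cellb_inv Hc.
have jj : j' = j by apply: ord_inj; rewrite -Ed' -Ed.
subst.
rewrite cellb_ord in Ha; rewrite cellb_ord in Hc.
have km : k < m by move: (ltn_ord ia) (ltn_ord ic); lia.
rewrite -[k]/(val (Ordinal km)) !cellb_ord.
case: (leqP ia ic) => Hac.
- by apply: (cc j ia (Ordinal km) ic _ Ha Hc) => /=; lia.
- by apply: (cc j ic (Ordinal km) ia _ Hc Ha) => /=; lia.
Qed.

Lemma cornerN : ~ submatrix S1pat A -> ~ submatrix S2pat A ->
  forall a b c d, cellb A (a,b) -> cellb A (c,d) -> cellb A (a,d) || cellb A (c,b).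
Proof.
move=> n1 n2 a b c d H1 H2.
have [ia [jb [Ea Eb]]] := cellb_inv H1.
have [ic [jd [Ec Ed]]] := cellb_inv H2.
subst; rewrite !cellb_ord; rewrite !cellb_ord in H1 H2.
case E1: (A ia jd) => //=; case E2: (A ic jb) => //=.
case: (ltngtP (val ia) (val ic)) => Hac; last first.
  by move/val_inj: Hac => Hac; subst; rewrite H2 in E1.
all: case: (ltngtP (val jb) (val jd)) => Hbd; last first.
all: try by move/val_inj: Hbd => Hbd; subst; rewrite H1 in E1.
all: exfalso; first [ (apply: n1; apply: (sub2 Hac Hbd);
    by move=> [[|[|//]] ?] [[|[|//]] ?]; rewrite mxE /= ?E1 ?E2 ?H1 ?H2)
  | (apply: n2; apply: (sub2 Hac Hbd);
    by move=> [[|[|//]] ?] [[|[|//]] ?]; rewrite mxE /= ?E1 ?E2 ?H1 ?H2) ].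
Qed.

End Main.

Unset Implicit Arguments.
Theorem proposition15 (m n : nat) (A : 'M[bool]_(m, n)) :
  is_polyomino A -> (L_convex A <-> avoids_HVS A).
Proof.
move=> _; split.
- move=> HL; have [[cr cc] _] := HL; split.
  + move=> [f [g [_ Hg HB]]].
    set o0 := @Ordinal 3 0 isT; set o1 := @Ordinal 3 1 isT; set o2 := @Ordinal 3 2 isT.
    have := HB ord0 o0; have := HB ord0 o1; have := HB ord0 o2; rewrite !mxE /= => e2 e1 e0.
    have := cr (f ord0) (g o0) (g o1) (g o2).
    rewrite -e0 -e1 -e2 (ltnW (Hg o0 o1 isT)) (ltnW (Hg o1 o2 isT)).
    by move/(_ isT isT isT).
  + move=> [f [g [Hf _ HB]]].
    set o0 := @Ordinal 3 0 isT; set o1 := @Ordinal 3 1 isT; set o2 := @Ordinal 3 2 isT.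
    have := HB o0 ord0; have := HB o1 ord0; have := HB o2 ord0; rewrite !mxE /= => e2 e1 e0.
    have := cc (g ord0) (f o0) (f o1) (f o2).
    rewrite -e0 -e1 -e2 (ltnW (Hf o0 o1 isT)) (ltnW (Hf o1 o2 isT)).
    by move/(_ isT isT isT).
  + move=> [f [g [_ _ HB]]].
    set o0 := @Ordinal 2 0 isT; set o1 := @Ordinal 2 1 isT.
    have := HB o0 o0; have := HB o0 o1; have := HB o1 o0; have := HB o1 o1.
    rewrite !mxE /= => e11 e10 e01 e00.
    have := Lcorner (i1 := f o0) (i2 := f o1) (j1 := g o0) (j2 := g o1) HL.
    by rewrite -e00 -e11 -e01 -e10; move/(_ isT isT).
  + move=> [f [g [_ _ HB]]].
    set o0 := @Ordinal 2 0 isT; set o1 := @Ordinal 2 1 isT.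
    have := HB o0 o0; have := HB o0 o1; have := HB o1 o0; have := HB o1 o1.
    rewrite !mxE /= => e11 e10 e01 e00.
    have := Lcorner (i1 := f o0) (i2 := f o1) (j1 := g o1) (j2 := g o0) HL.
    by rewrite -e00 -e11 -e01 -e10; move/(_ isT isT).
- case=> nH nV n1 n2; have cv := avoid_convex nH nV.
  split => // [[a b] [c d] H1 H2].
  case/orP: (cornerN n1 n2 H1 H2) => Hc.
  + have [s [Hall Hu Hp Hl /andP[Hm Hch]]] := @Hpath (cellb A) a b c d
      (fun k Hk => rowN cv H1 Hc Hk) (fun k Hk => colN cv Hc H2 Hk).
    by exists s; split.
  + have [s [Hall Hu Hp Hl /andP[Hm Hch]]] := @Vpath (cellb A) a b c d
      (fun k Hk => colN cv H1 Hc Hk) (fun k Hk => rowN cv Hc H2 Hk).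
    by exists s; split.
Qed.
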